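(* Let $\Gamma$ be the triangle graph (three vertices, three edges $e_1,e_2,e_3$) with magnetic field $1$ at one vertex and $0$ at the other two, i.e. vertex weights $1,0,0$, so that its $\mathbf{V}$-polynomial is $$x_1\big(x_0^2+x_0(t_{e_1}+t_{e_2}+t_{e_3})+t_{e_1}(t_{e_2}+t_{e_3}+t_{e_2}t_{e_3})+t_{e_2}t_{e_3}\big)$$ in the variables $x_0,x_1,t_{e_1},t_{e_2},t_{e_3}$. Then the affine hypersurface in $\mathbb{A}^5$ defined by the vanishing of this polynomial is polynomially countable.
   Context: For a graph $\Gamma$ with vertex weight $\omega:V(\Gamma)\to S$, the $\mathbf{V}$-polynomial is $\mathbf{V}_\Gamma(t,x)=\sum_{A\subseteq E(\Gamma)}\prod_{j}x_{s_j}\prod_{e\in A}t_e$, where the product over $j$ runs over the connected components of the spanning subgraph with edge set $A$ and $s_j$ is the sum of the weights of the vertices of the $j$-th component. A hypersurface defined by a polynomial with integer coefficients is polynomially countable if for every prime $p$ and every power $q=p^r$, the number $N(q)$ of its $\mathbb{F}_q$-points is given by a polynomial in $q$ with integer coefficients. *)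

(* Defs.v *)
From mathcomp Require Import all_boot all_algebra all_field.
Set Implicit Arguments. Unset Strict Implicit. Unset Printing Implicit Defensive.
Import GRing.Theory.
Local Open Scope ring_scope.

Definition Vtri (R : comNzRingType) (x0 x1 t1 t2 t3 : R) : R :=
  x1 * (x0 ^+ 2 + x0 * (t1 + t2 + t3) + t1 * (t2 + t3 + t2 * t3) + t2 * t3).

Definition Vtri_count (F : finFieldType) : nat :=
  #|[set v : F * F * F * F * F |
      Vtri v.1.1.1.1 v.1.1.1.2 v.1.1.2 v.1.2 v.2 == 0]|.

(* Main.v *)
Require Import Defs.
From mathcomp Require Import all_boot all_algebra all_field.
From mathcomp Require Import ring.
Import GRing.Theory.

Section S.
Variable F : finFieldType.

Lemma lin_count (a b : F) :
  (\sum_(t : F) ((t * a + b == 0)%R : nat) =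
   if a == 0%R then #|F| * (b == 0%R) else 1)%N.
Proof.
have [->|a0] := eqP.
  under eq_bigr do rewrite GRing.mulr0 GRing.add0r.
  by rewrite sum_nat_const.
rewrite (bigD1 (- b / a)%R) //= big1 ?addn0.
  have a0' : a != 0%R by apply/eqP.
  by rewrite GRing.divfK // GRing.addNr eqxx.
have a0' : a != 0%R by apply/eqP.
move=> t /eqP nt; apply/eqP; rewrite eqb0; apply/negP => /eqP h; apply: nt.
apply: (GRing.mulIf a0'); rewrite GRing.divfK //.
by apply/eqP; rewrite -GRing.addr_eq0 h.
Qed.

Lemma count_nested :
  Vtri_count F = (\sum_(x0 : F) \sum_(x1 : F) \sum_(t1 : F) \sum_(t2 : F) \sum_(t3 : F)
     ((Vtri x0 x1 t1 t2 t3 == 0)%R : nat))%N.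
Proof.
rewrite pair_big pair_big pair_big pair_big /Vtri_count -sum1_card big_mkcond /=.
by apply: eq_bigr => v _; rewrite inE; case: (_ == _).
Qed.
End S.
Section S2.
Variable F : finFieldType.
Lemma count_reord :
  Vtri_count F = (\sum_(x1 : F) \sum_(t2 : F) \sum_(t3 : F) \sum_(x0 : F) \sum_(t1 : F)
     ((Vtri x0 x1 t1 t2 t3 == 0)%R : nat))%N.
Proof.
rewrite count_nested exchange_big; apply: eq_bigr => x1 _.
rewrite (eq_bigr (fun x0 => \sum_(t2 : F) \sum_(t3 : F) \sum_(t1 : F)
     ((Vtri x0 x1 t1 t2 t3 == 0)%R : nat))%N); last first.
  move=> x0 _; rewrite exchange_big; apply: eq_bigr => t2 _.
  by rewrite exchange_big.
rewrite exchange_big; apply: eq_bigr => t2 _.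
by rewrite exchange_big.
Qed.

Lemma compl_count (P : pred F) :
  (\sum_(x : F) (P x : nat) + \sum_(x : F) (~~ P x : nat) = #|F|)%N.
Proof.
rewrite -big_split /=; under eq_bigr do rewrite addnC addn_negb.
by rewrite sum_nat_const muln1.
Qed.
End S2.
Section S3.
Variable F : finFieldType.
Local Notation q := #|F|.

Lemma one_count (c : F) : (\sum_(t : F) (t == c : nat) = 1)%N.
Proof.
rewrite (bigD1 c) //= eqxx big1 // => t /negbTE ->; by [].
Qed.

Lemma ncount (c : F) : (\sum_(t : F) (t != c : nat) = q - 1)%N.
Proof. by rewrite -(@compl_count F (pred1 c)) one_count addKn. Qed.

Lemma if_sum (P : pred F) a b :
  (\sum_(t : F) (if P t then a else b) =
   (\sum_(t : F) (P t : nat)) * a + (\sum_(t : F) (~~ P t : nat)) * b)%N.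
Proof.
rewrite !big_distrl -big_split /=; apply: eq_bigr => t _.
by case: (P t); rewrite /= ?mul1n ?mul0n ?addn0.
Qed.

Definition u (t : F) := (t * (1 + t))%R.

Lemma u_count : (\sum_(t : F) (u t == 0%R : nat) = 2)%N.
Proof.
have m10 : (-1 : F)%R != 0%R by rewrite GRing.oppr_eq0 GRing.oner_eq0.
rewrite (bigD1 0%R) //= (bigD1 (-1)%R) //=.
rewrite /u GRing.mul0r eqxx GRing.addrN GRing.mulr0 eqxx big1 // => t /andP [t0 t1].
apply/eqP; rewrite eqb0 GRing.mulf_eq0 negb_or t0 /=.
by rewrite GRing.addrC GRing.addr_eq0.
Qed.
End S3.
Arguments u {F}.
Section S4.
Variable F : finFieldType.
Local Notation q := #|F|.
Local Open Scope ring_scope.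

Lemma inner (x1 t2 t3 x0 : F) :
  (\sum_(t1 : F) ((Vtri x0 x1 t1 t2 t3 == 0%R) : nat) =
   if x1 == 0%R then q else
   if (x0 + (t2 + t3 + t2 * t3) == 0)%R then q * ((x0 + t2) * (x0 + t3) == 0)%R
   else 1)%N.
Proof.
have E t1 : Vtri x0 x1 t1 t2 t3 =
   x1 * (t1 * (x0 + (t2 + t3 + t2 * t3)) + (x0 + t2) * (x0 + t3)).
  by rewrite /Vtri; ring.
under eq_bigr do rewrite E mulf_eq0.
case: eqP => _ /=.
  by rewrite sum_nat_const muln1.
by rewrite lin_count.
Qed.

Lemma x0sum (t2 t3 : F) :
  (\sum_(x0 : F) (if (x0 + (t2 + t3 + t2 * t3) == 0)%R
      then q * ((x0 + t2) * (x0 + t3) == 0)%R else 1) =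
   q * (u t2 * u t3 == 0)%R + (q - 1))%N.
Proof.
set c := t2 + t3 + t2 * t3.
rewrite (bigD1 (- c)) //= addNr eqxx.
have -> : (- c + t2) * (- c + t3) = u t2 * u t3 by rewrite /c /u; ring.
congr (_ + _)%N.
rewrite -(@ncount F (- c)) [LHS]big_mkcond /=; apply: eq_bigr => x _.
case: eqP => [->|/eqP nx]; first by [].
by rewrite addr_eq0 (negbTE nx).
Qed.

Lemma t3sum (t2 : F) :
  (\sum_(t3 : F) ((u t2 * u t3 == 0)%R : nat) = if (u t2 == 0)%R then q else 2)%N.
Proof.
under eq_bigr do rewrite mulf_eq0.
case: eqP => _ /=; first by rewrite sum_nat_const muln1.
exact: u_count.
Qed.

Lemma nu_count : (\sum_(t : F) (~~ (u t == 0%R) : nat) = q - 2)%N.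
Proof. by rewrite -(@compl_count F (fun t => u t == 0)) u_count addKn. Qed.

Lemma step (x1 : F) :
  (\sum_(t2 : F) \sum_(t3 : F) \sum_(x0 : F) \sum_(t1 : F)
     ((Vtri x0 x1 t1 t2 t3 == 0%R) : nat) =
   if x1 == 0%R then q * (q * (q * q))
   else q * (2 * q + (q - 2) * 2) + q * (q * (q - 1)))%N.
Proof.
under eq_bigr do under eq_bigr do under eq_bigr do rewrite inner.
case: eqP => _.
  by rewrite !sum_nat_const.
under eq_bigr do under eq_bigr do rewrite x0sum.
under eq_bigr do rewrite big_split /= -big_distrr /= t3sum sum_nat_const.
rewrite big_split /= -big_distrr /= sum_nat_const.
rewrite (@if_sum F (fun t => u t == 0)) u_count nu_count.
by rewrite mulnC.
Qed.

Lemma count_formula :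
  Vtri_count F = (q * (q * (q * q)) +
    (q - 1) * (q * (2 * q + (q - 2) * 2) + q * (q * (q - 1))))%N.
Proof.
rewrite count_reord.
under eq_bigr do rewrite step.
rewrite (@if_sum F (fun t => t == 0)) one_count.
have -> : (\sum_(t : F) (~~ (t == 0%R)) : nat)%N = (q - 1)%N by exact: ncount.
by rewrite mul1n mulnC.
Qed.
End S4.
Local Open Scope ring_scope.
Theorem theorem3p4 :
  exists P : {poly int}, forall F : finFieldType,
    (Vtri_count F)%:Z = P.[(#|F|)%:Z].
Proof.
exists (2%:P * 'X^4 + 2%:P * 'X^3 - 7%:P * 'X^2 + 4%:P * 'X) => F.
rewrite count_formula !hornerE.
have := card_finNzRing_gt1 F.
case: #|F| => [|[|k]] // _.
rewrite !subSS !subn0 /=.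
rewrite !(PoszD, PoszM) -!(natz).
rewrite ?(natrD, natrM, natrX).
ring.
Qed.
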